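(* Let $A$ be a finite set, let $C$ and $D$ be total clones on $A$ with $D \subseteq C$, let $T\subseteq P_A$ be a strong partial class, and let $I \subseteq \mathcal{I}_{\mathrm{str}}(C)$, such that: (i) $T \cap O_A \subseteq D$; (ii) $T \star \mathrm{Str}(D) \subseteq \mathrm{Str}(D) \cup T$ and $\mathrm{Str}(D) \star T \subseteq \mathrm{Str}(D) \cup T$; (iii) $X \cap T \neq Y \cap T$ for all $X,Y \in I$ with $X \neq Y$. Then $|\mathcal{I}_{\mathrm{str}}(D)| \geq |I|$.
   Context: A partial function of arity $n$ on $A$ is a map $f:\operatorname{dom} f\to A$ with $\operatorname{dom} f\subseteq A^n$; total if $\operatorname{dom} f=A^n$. $P_A$ is the set of all partial functions, $O_A$ the set of total ones. Composition $F=f(g_1,\dots,g_n)$ is given by $F(\mathbf{x})=f(g_1(\mathbf{x}),\dots,g_n(\mathbf{x}))$ on $\operatorname{dom} F=\{\mathbf{x}\in\bigcap_i\operatorname{dom} g_i : (g_1(\mathbf{x}),\dots,g_n(\mathbf{x}))\in\operatorname{dom} f\}$. A partial clone is a composition-closed subset of $P_A$ containing all projections; a total clone is one contained in $O_A$. $f\le g$ means $\operatorname{dom} f\subseteq \operatorname{dom} g$ and $f=g$ on $\operatorname{dom} f$; $\mathrm{Str}(X)=\{f\in P_A:\exists g\in X,\ f\le g\}$, and $X$ is strong if $X=\mathrm{Str}(X)$. For a total clone $C$, $\mathcal{I}_{\mathrm{str}}(C)$ is the set of strong partial clones $X$ with $X\cap O_A=C$. For $f$ $n$-ary and $g$ $m$-ary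 define: $(\zeta f)(x_1,\dots,x_n)=f(x_2,\dots,x_n,x_1)$; $(\tau f)(x_1,\dots,x_n)=f(x_2,x_1,x_3,\dots,x_n)$; $(\Delta f)(x_1,\dots,x_{n-1})=f(x_1,x_1,x_2,\dots,x_{n-1})$ (with $\zeta f=\tau f=\Delta f=f$ if $n=1$); $(\nabla f)(x_1,\dots,x_{n+1})=f(x_2,\dots,x_{n+1})$; $(f\star g)(x_1,\dots,x_{n+m-1})=f(g(x_1,\dots,x_m),x_{m+1},\dots,x_{n+m-1})$, with domains given by the composition rule. A partial class is a subset of $P_A$ closed under $\star,\zeta,\tau,\nabla,\Delta$; it is strong if it equals its $\mathrm{Str}$. For $X,Y\subseteq P_A$, $X\star Y=\{f\star g: f\in X, g\in Y\}$. *)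

(* Defs.v *)
From mathcomp Require Import all_boot.
Set Implicit Arguments. Unset Strict Implicit. Unset Printing Implicit Defensive.

Section PartialFunctions.
Variable A : finType.

(* A partial function of arity (pa f).+1 : arities are >= 1.
   dom f = { x | pf f x <> None }. *)
Record pfun := PFun { pa : nat; pf : (pa.+1).-tuple A -> option A }.
Arguments pf : clear implicits.

Definition arity (f : pfun) : nat := (pa f).+1.

Definition pset := pfun -> Prop.

Definition ptotal (f : pfun) : Prop := forall x, pf f x <> None.

Definition proj (n : nat) (i : 'I_n.+1) : pfun :=
  @PFun n (fun x => Some (tnth x i)).

Definition pcomp_raw (n m : nat) (f : n.+1.-tuple A -> option A)
  (g : 'I_n.+1 -> m.+1.-tuple A -> option A) : m.+1.-tuple A -> option A :=
  fun x => if [forall i, g i x != None]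
           then f [tuple odflt (thead x) (g i x) | i < n.+1]
           else None.

Definition partial_clone (X : pset) : Prop :=
  (forall n (i : 'I_n.+1), X (proj i)) /\
  (forall n m (f : n.+1.-tuple A -> option A)
          (g : 'I_n.+1 -> m.+1.-tuple A -> option A),
      X (PFun f) -> (forall i, X (PFun (g i))) -> X (PFun (pcomp_raw f g))).

Definition total_clone (X : pset) : Prop :=
  partial_clone X /\ (forall f, X f -> ptotal f).

Definition le_raw (n : nat) (f g : n.+1.-tuple A -> option A) : Prop :=
  forall x, f x <> None -> g x = f x.

Definition ple (f g : pfun) : Prop :=
  exists n (f' g' : n.+1.-tuple A -> option A),
    f = PFun f' /\ g = PFun g' /\ le_raw f' g'.

Definition Str (X : pset) : pset := fun f => exists2 g, X g & ple f g.

Definition strong (X : pset) : Prop := X = Str X.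

Definition Istr (C : pset) : pset -> Prop :=
  fun X => partial_clone X /\ strong X /\ (fun f => X f /\ ptotal f) = C.

Definition zeta (f : pfun) : pfun :=
  @PFun (pa f) (fun x => pf f [tuple tnth x (ordS i) | i < (pa f).+1]).

Definition tau_idx (n : nat) (i : 'I_n.+1) : 'I_n.+1 :=
  if val i == 0 then inord 1 else if val i == 1 then inord 0 else i.

Definition tau (f : pfun) : pfun :=
  @PFun (pa f) (fun x => pf f [tuple tnth x (tau_idx i) | i < (pa f).+1]).

Definition nabla (f : pfun) : pfun :=
  @PFun (pa f).+1
    (fun x => pf f [tuple tnth x (lift ord0 i) | i < (pa f).+1]).

Definition Delta (f : pfun) : pfun :=
  match f with
  | @PFun 0 g => @PFun 0 g
  | @PFun n.+1 g =>
      @PFun n (fun x => g [tuple tnth x (inord i.-1) | i < n.+2])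
  end.

(* (f * g)(x_1..x_{n+m-1}) = f(g(x_1..x_m), x_{m+1}, ..., x_{n+m-1}) *)
Definition star (f g : pfun) : pfun :=
  @PFun (pa f + pa g)
    (fun x =>
       match pf g [tuple tnth x (inord i) | i < (pa g).+1] with
       | None => None
       | Some y =>
           pf f [tuple if val i == 0 then y else tnth x (inord (pa g + i))
                | i < (pa f).+1]
       end).

Definition partial_class (X : pset) : Prop :=
  (forall f g, X f -> X g -> X (star f g)) /\
  (forall f, X f -> X (zeta f)) /\
  (forall f, X f -> X (tau f)) /\
  (forall f, X f -> X (nabla f)) /\
  (forall f, X f -> X (Delta f)).

Definition strong_partial_class (X : pset) : Prop :=
  partial_class X /\ strong X.

Definition card_ge (J I : pset -> Prop) : Prop :=
  exists phi : pset -> pset,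
    (forall X, I X -> J (phi X)) /\
    (forall X Y, I X -> I Y -> phi X = phi Y -> X = Y).

End PartialFunctions.

(* Main.v *)
Require Import Defs.
From mathcomp Require Import all_boot.
From mathcomp Require Import fingroup perm.
From mathcomp Require Import zify.
From Stdlib Require Import FunctionalExtensionality.
Set Implicit Arguments. Unset Strict Implicit. Unset Printing Implicit Defensive.

Section Minors.
Variable A : finType.

Definition mnr n k (f : n.+1.-tuple A -> option A) (s : 'I_n.+1 -> 'I_k.+1)
  : k.+1.-tuple A -> option A :=
  fun x => f [tuple tnth x (s i) | i < n.+1].

Lemma mnr_comp n k l (f : n.+1.-tuple A -> option A) (a : 'I_n.+1 -> 'I_k.+1)
  (b : 'I_k.+1 -> 'I_l.+1) : mnr (mnr f a) b = mnr f (fun i => b (a i)).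
Proof.
apply: functional_extensionality => x; rewrite /mnr; congr f.
by apply: eq_from_tnth => i; rewrite !(tnth_map, tnth_ord_tuple).
Qed.

Lemma mnr_ext n k (f : n.+1.-tuple A -> option A) (a b : 'I_n.+1 -> 'I_k.+1) :
  a =1 b -> mnr f a = mnr f b.
Proof.
move=> e; apply: functional_extensionality => x; rewrite /mnr; congr f.
by apply: eq_from_tnth => i; rewrite !tnth_map !tnth_ord_tuple e.
Qed.

Lemma mnr_id n (f : n.+1.-tuple A -> option A) : mnr f id = f.
Proof.
apply: functional_extensionality => x; rewrite /mnr; congr f.
by apply: eq_from_tnth => i; rewrite !tnth_map !tnth_ord_tuple.
Qed.

Variable S : pset A.
Hypothesis Scl : partial_class S.

Definition goodp n (s : {perm 'I_n.+1}) :=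
  forall f, S (@PFun A n f) -> S (@PFun A n (mnr f s)).

Local Open Scope group_scope.

Lemma good_mul n (s t : {perm 'I_n.+1}) : goodp s -> goodp t -> goodp (s * t).
Proof.
move=> Hs Ht f Sf; have := Ht _ (Hs _ Sf); rewrite mnr_comp.
by rewrite (@mnr_ext _ _ f (fun i => t (s i)) (s * t)) // => i; rewrite permM.
Qed.

Lemma good1 n : goodp (1 : {perm 'I_n.+1}).
Proof. by move=> f Sf; rewrite (@mnr_ext _ _ f _ id) ?mnr_id // => i; rewrite perm1. Qed.

Lemma good_exp n (s : {perm 'I_n.+1}) k : goodp s -> goodp (s ^+ k).
Proof. move=> Hs; elim: k => [|k IH]; first exact: good1. by rewrite expgS; exact: (good_mul Hs IH). Qed.

Lemma good_inv n (s : {perm 'I_n.+1}) : goodp s -> goodp s^-1.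
Proof. by move=> Hs; rewrite invg_expg; apply: good_exp. Qed.

Lemma good_conj n (s t : {perm 'I_n.+1}) : goodp s -> goodp t -> goodp (s ^ t).
Proof. by move=> Hs Ht; rewrite conjgE; exact: (good_mul (good_inv Ht) (good_mul Hs Ht)). Qed.

Definition zp n : {perm 'I_n.+1} := perm (@ordS_inj n.+1).

Lemma good_z n : goodp (zp n).
Proof.
move=> f Sf; have := (proj1 (proj2 Scl)) _ Sf.
move=> H; suff -> : mnr f (zp n) = mnr f (@ordS n.+1) by exact: H.
by apply: mnr_ext => i; rewrite permE.
Qed.

Lemma good_t n : goodp (tperm (ord0 : 'I_n.+2) (inord 1)).
Proof.
move=> f Sf; have := (proj1 (proj2 (proj2 Scl))) _ Sf.
move=> H; suff -> : mnr f (tperm ord0 (inord 1)) = mnr f (@tau_idx n.+1) by exact: H.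
apply: mnr_ext => i.
have e1 : nat_of_ord (inord 1 : 'I_n.+2) = 1%N by rewrite inordK.
rewrite /tau_idx; case: tpermP => [->|->|n0 n1] /=; first by [].
  by apply: val_inj; rewrite e1 /= inordK.
have iv0 : nat_of_ord i != 0%N by apply/eqP => h; apply: n0; apply: val_inj.
have iv1 : nat_of_ord i != 1%N by apply/eqP => h; apply: n1; apply: val_inj => /=; rewrite h inordK.
by rewrite (negbTE iv0) (negbTE iv1).
Qed.

Lemma good_tp0 n j : (0 < j <= n.+1)%N -> goodp (tperm (ord0 : 'I_n.+2) (inord j)).
Proof.
elim: j => [//|j IH] /andP [_ hj].
case: j IH hj => [|j] IH hj; first exact: good_t.
have := good_conj (good_conj (IH (leqW hj)) (@good_z n.+1)) (@good_t n).
rewrite !tpermJ.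
have z0 : zp n.+1 ord0 = inord 1.
  by apply: val_inj; rewrite permE /= inordK // modn_small.
have zj : zp n.+1 (inord j.+1) = inord j.+2.
  by apply: val_inj; rewrite permE /= !inordK ?modn_small //; lia.
rewrite z0 zj tpermR tpermD //.
  by apply/eqP => /(congr1 val) /=; rewrite !inordK //; lia.
by apply/eqP => /(congr1 val) /=; rewrite !inordK //; lia.
Qed.

Lemma good_tp n (x y : 'I_n.+1) : goodp (tperm x y).
Proof.
case: (x =P y) => [->|nxy]; first by rewrite tperm1; apply: good1.
case: n x y nxy => [|n] x y nxy.
  by case: nxy; apply: val_inj; case: x y => [[|?] ?] [[|?] ?].
have g0 : forall z : 'I_n.+2, goodp (tperm ord0 z).
  move=> z; case: (z =P ord0) => [->|nz]; first by rewrite tperm1; apply: good1.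
  rewrite -(inord_val z); apply: good_tp0; apply/andP; split.
    by rewrite lt0n; apply/eqP => h; apply: nz; apply: val_inj.
  by rewrite -ltnS.
case: (x =P ord0) => [->|nx]; first exact: g0.
case: (y =P ord0) => [->|ny]; first by rewrite tpermC; exact: g0.
have := good_conj (g0 y) (g0 x).
rewrite tpermJ tpermL tpermD //; apply/eqP => h; [by apply: ny | by apply: nxy].
Qed.

Lemma good_all n (s : {perm 'I_n.+1}) : goodp s.
Proof.
case: (prod_tpermP s) => ts -> _.
elim: ts => [|t ts IH]; first by rewrite big_nil; apply: good1.
by rewrite big_cons; exact: (good_mul (good_tp _ _) IH).
Qed.

Lemma minor_all N : forall n k (f : n.+1.-tuple A -> option A)
  (s : 'I_n.+1 -> 'I_k.+1), (n + k < N)%N -> S (PFun f) -> S (PFun (mnr f s)).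
Proof.
elim: N => // N IH n k f s hN Sf.
case: (boolP (injectiveb s)) => [/injectiveP inj | /injectivePn [i [j nij eij]]].
- case: (boolP [exists y, [forall x, s x != y]]) => [/existsP [y /forallP hy] | /existsPn hs].
  + case: k s hN y hy inj => [|k] s hN y hy inj.
      by have := hy ord0; rewrite (ord1 (s ord0)) (ord1 y) eqxx.
    pose p := tperm (ord0 : 'I_k.+2) y.
    pose s2 := fun x => (inord (p (s x)).-1 : 'I_k.+1).
    have Hs2 : S (PFun (mnr f s2)) by apply: IH => //; lia.
    have Hn : S (PFun (mnr (mnr f s2) (lift ord0))).
      exact: (proj1 (proj2 (proj2 (proj2 Scl))) _ Hs2).
    have := good_all p Hn; rewrite !mnr_comp.
    suff -> : mnr f s = mnr f (fun i => p (lift ord0 (s2 i))) by [].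
    apply: mnr_ext => x.
    have px : nat_of_ord (p (s x)) != 0%N.
      rewrite /p; case: tpermP => [e|e|n0 _].
      - by apply/eqP => h; case/negP: (hy x); rewrite e; apply/eqP; apply: val_inj => /=; rewrite h.
      - by case/negP: (hy x); rewrite e.
      - by apply/eqP => h; apply: n0; apply: val_inj.
    have -> : lift ord0 (s2 x) = p (s x).
      apply: val_inj; rewrite /= /bump leq0n add1n /s2 inordK ?prednK ?lt0n //; by rewrite -ltnS ltn_ord.
    by rewrite /p tpermK.
  + have le1 : (n.+1 <= k.+1)%N.
      by have := leq_card s inj; rewrite !card_ord.
    pose g := fun y => odflt ord0 [pick x | s x == y].
    have sg : forall y, s (g y) = y.
      move=> y; rewrite /g; case: pickP => [x /eqP //|h0].
      by have := hs y; move/forallPn => [x]; rewrite negbK h0.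
    have ginj : injective g by move=> y1 y2 e; rewrite -(sg y1) -(sg y2) e.
    have le2 : (k.+1 <= n.+1)%N.
      by have := leq_card g ginj; rewrite !card_ord.
    have ek : k = n by lia.
    subst k.
    have := good_all (perm inj) Sf.
    by rewrite (@mnr_ext _ _ f (perm inj) s) // => x; rewrite permE.
- case: n f Sf s hN i j nij eij => [|n] f Sf s hN i j nij eij.
    by case/eqP: nij; rewrite (ord1 i) (ord1 j).
  pose a := tperm (ord0 : 'I_n.+2) i.
  pose r := a * tperm (a (inord 1)) j.
  have r0 : r ord0 = i.
    rewrite /r permM /a tpermL tpermD //.
      apply/eqP => h; have : a ord0 = a (inord 1) by rewrite /a tpermL h.
      by move/perm_inj/(congr1 val); rewrite /= inordK.
    by rewrite eq_sym.
  have r1 : r (inord 1) = j by rewrite /r permM tpermL.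
  have Sg1 := good_all r^-1 Sf.
  have Sd : S (@PFun A n (mnr (mnr f r^-1) (fun i : 'I_n.+2 => inord i.-1))).
    exact: (proj2 (proj2 (proj2 (proj2 Scl))) _ Sg1).
  have := IH n k _ (fun x : 'I_n.+1 => s (r (lift ord0 x))) ltac:(lia) Sd.
  rewrite !mnr_comp.
  suff -> : mnr f s = mnr f (fun x => s (r (lift ord0 (inord (r^-1 x).-1)))) by [].
  apply: mnr_ext => x.
  case: (r^-1 x =P ord0) => [e|ne].
    have -> : lift ord0 (inord (r^-1 x).-1 : 'I_n.+1) = inord 1.
      by apply: val_inj; rewrite e /= /bump /= !inordK.
    by rewrite r1 -eij -r0 -e permKV.
  have -> : lift ord0 (inord (r^-1 x).-1 : 'I_n.+1) = r^-1 x.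
    apply: val_inj; rewrite /= /bump /= add1n inordK ?prednK ?lt0n //.
    1,3: by apply/eqP => h; apply: ne; apply: val_inj.
    by rewrite -ltnS ltn_ord.

  by rewrite permKV.
Qed.

Lemma mcl n k f (s : 'I_n.+1 -> 'I_k.+1) : S (@PFun A n f) -> S (@PFun A k (mnr f s)).
Proof. by apply: (@minor_all (n + k).+1). Qed.

Lemma vinord l a : nat_of_ord (@inord l a) = if (a < l.+1)%N then a else 0%N.
Proof.
rewrite /inord /insubd; case: insubP => [u hu -> /=|/negbTE hu]; first by rewrite hu.
by rewrite hu.
Qed.

Ltac ifs := repeat match goal with |- context [if ?b then _ else _] =>
  lazymatch b with context [if _ then _ else _] => fail | _ =>
    case: (boolP b) => ?; rewrite /= end end.

Section Comp.
Variables (n m : nat) (f : n.+1.-tuple A -> option A)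
  (g : 'I_n.+1 -> m.+1.-tuple A -> option A).

Definition xp r (y : (r + m).+1.-tuple A) : m.+1.-tuple A :=
  [tuple tnth y (inord i) | i < m.+1].

Definition Hc r (y : (r + m).+1.-tuple A) : bool :=
  [forall i : 'I_n.+1, (i < n.+1 - r)%N ==> (g i (xp y) != None)].

Definition H r (y : (r + m).+1.-tuple A) : option A :=
  if Hc y then
    f [tuple (if (i < n.+1 - r)%N then odflt (thead y) (g i (xp y))
              else tnth y (inord (m.+1 + i - (n.+1 - r)))) | i < n.+1]
  else None.

Lemma tnth_eqv T l (y : l.-tuple T) (a b : 'I_l) : (a = b :> nat) -> tnth y a = tnth y b.
Proof. by move=> e; congr tnth; apply: val_inj. Qed.

Lemma H_step r : (r < n.+1)%N ->
  let j' : 'I_n.+1 := inord (n - r) in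
  let mu := fun p : 'I_(r.+1 + m).+1 =>
     (inord (if (p < m.+1)%N then p.+1 else if p == m.+1 :> nat then 0 else p) : 'I_(r.+1+m).+1) in
  let nu := fun p : 'I_((r.+1 + m) + m).+1 =>
     (inord (if (p < m.+1)%N then (p : nat) else p - m.+1) : 'I_(r + m).+1) in
  H (r := r) = mnr (@pf A (star (@PFun A (r.+1 + m) (mnr (H (r := r.+1)) mu)) (@PFun A m (g j')))) nu.
Proof.
move=> hr j' mu nu; apply: functional_extensionality => y.
rewrite /mnr /=.
have ex : [tuple tnth [tuple tnth y (nu i0) | i0 < (r.+1 + m + m).+1] (inord i) | i < m.+1] = xp y.
  apply: eq_from_tnth => i; rewrite /xp !(tnth_map, tnth_ord_tuple).
  move: (ltn_ord i) => hi; congr tnth; apply: val_inj => /=; rewrite /nu !vinord; ifs; lia.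
rewrite ex /H.
have vj : nat_of_ord j' = (n - r)%N by rewrite /j' inordK //; lia.
case eg: (g j' (xp y)) => [yv|]; last first.
  have -> : Hc y = false.
    apply/negbTE/forallPn; exists j'; rewrite eg /= implybF negbK vj; lia.
  by [].
set u := [tuple tnth _ (mu _) | _ < _].
have tu : forall p : 'I_(r.+1+m).+1, tnth u p =
    if (p < m.+1)%N then tnth y (inord p)
    else if p == m.+1 :> nat then yv else tnth y (inord p.-1).
  move=> p; move: (ltn_ord p) => hp; rewrite /u !(tnth_map, tnth_ord_tuple) /mu !vinord.
  ifs; try lia; try reflexivity; congr tnth; apply: val_inj => /=; rewrite /nu !vinord; ifs; lia.
clearbody u.
have xu : xp u = xp y.
  apply: eq_from_tnth => i; rewrite /xp !(tnth_map, tnth_ord_tuple) tu.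
  move: (ltn_ord i) => hi; rewrite !vinord; ifs; try lia; congr tnth; apply: val_inj => /=; rewrite !vinord; ifs; lia.
have hc : Hc u = Hc y.
  rewrite /Hc xu subSS; apply/forallP/forallP => h i; move: (h i) (ltn_ord i) => {h}.
    move=> /implyP h hi; apply/implyP => hi2.
    case: (ltnP i (n - r)) => hi3; first exact: h.
    have -> : i = j' by apply: val_inj => /=; rewrite vj; lia.
    by rewrite eg.
  move=> /implyP h hi; apply/implyP => hi2; apply: h; lia.
rewrite hc; case: ifP => // cy; congr f.
apply: eq_from_tnth => i; rewrite !(tnth_map, tnth_ord_tuple) subSS tu.
have hii := ltn_ord i. have hci0 := forallP cy i. have hci := implyP hci0.
case: (ltnP i (n - r)) => hi3.
  have hi4 : (i < n.+1 - r)%N by lia.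
  rewrite hi4 xu; move: (hci hi4); by case: (g i (xp y)).
have hi4 : (i < n.+1 - r)%N = (i == n - r :> nat) by apply/idP/eqP; lia.
rewrite hi4.
case: eqP => hi5.
  have -> : i = j' by apply: val_inj => /=; rewrite vj.
  rewrite eg /= !vinord; ifs; try lia; reflexivity.
rewrite !vinord; ifs; try lia; congr tnth; apply: val_inj => /=; rewrite !vinord; ifs; lia.
Qed.
Lemma H_base : H (r := n.+1) = mnr f (fun i : 'I_n.+1 => (inord (m.+1 + i) : 'I_(n.+1 + m).+1)).
Proof.
apply: functional_extensionality => y; rewrite /H /mnr.
have -> : Hc y = true.
  by apply/forallP => i; rewrite subnn.
congr f; apply: eq_from_tnth => i; rewrite !(tnth_map, tnth_ord_tuple) subnn /= subn0.
by [].
Qed.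

Lemma xp0 (y : (0 + m).+1.-tuple A) : xp y = y.
Proof.
apply: eq_from_tnth => i; rewrite /xp !(tnth_map, tnth_ord_tuple).
by congr tnth; apply: val_inj => /=; rewrite inordK.
Qed.

Lemma H_final : H (r := 0) = pcomp_raw f g.
Proof.
apply: functional_extensionality => y; rewrite /H /pcomp_raw xp0.
have -> : Hc y = [forall i, g i y != None].
  rewrite /Hc xp0; apply/forallP/forallP => h i; move: (h i); rewrite subn0 ltn_ord //.
case: ifP => // _; congr f; apply: eq_from_tnth => i; rewrite !(tnth_map, tnth_ord_tuple) subn0 ltn_ord.
by [].
Qed.

Lemma comp_closed : S (PFun f) -> (forall i, S (PFun (g i))) -> S (PFun (pcomp_raw f g)).
Proof.
move=> Sf Sg.
have key : forall d, (d <= n.+1)%N -> S (PFun (H (r := n.+1 - d))).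
  elim => [_|d IH hd]; first by rewrite subn0 H_base; apply: mcl.
  have hr : (n.+1 - d.+1 < n.+1)%N by lia.
  rewrite (H_step hr).
  apply: mcl; apply: (proj1 Scl) => //.
  apply: mcl; have -> : (n.+1 - d.+1).+1 = n.+1 - d by lia.
  by apply: IH; lia.
by have := key n.+1 (leqnn _); rewrite subnn H_final.
Qed.
End Comp.
End Minors.

From Stdlib Require Import PropExtensionality Classical Eqdep_dec PeanoNat.

Section Main.
Variable A : finType.
Implicit Types (X Y D T C : pset A).

Lemma ple_refl (F : pfun A) : ple F F.
Proof. by case: F => n f; exists n, f, f; split => // x. Qed.

Lemma Str_incl X F : X F -> Str X F.
Proof. by move=> XF; exists F => //; apply: ple_refl. Qed.

Lemma PFun_inj n (f g : n.+1.-tuple A -> option A) : PFun f = PFun g -> f = g.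
Proof.
move=> e; have := f_equal (fun F : pfun A => existT (fun k => k.+1.-tuple A -> option A) (pa F) (@pf A F)) e.
move=> H; exact: (Eqdep_dec.inj_pair2_eq_dec _ PeanoNat.Nat.eq_dec _ _ _ _ H).
Qed.

Lemma ple_trans (F G H : pfun A) : ple F G -> ple G H -> ple F H.
Proof.
move=> [n [f [g [-> [-> le1]]]]] [n' [g' [h [e [-> le2]]]]].
have en : n' = n by have := f_equal (@pa A) e.
subst n'; have eg := PFun_inj e; subst g'.
exists n, f, h; split => //; split => // x fx.
by rewrite le2 le1 //; rewrite le1.
Qed.

Lemma Str_Str X F : Str (Str X) F -> Str X F.
Proof. by move=> [G [H XH lGH] lFG]; exists H => //; apply: ple_trans lFG lGH. Qed.

Lemma ple_total (F G : pfun A) : ple F G -> ptotal F -> G = F.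
Proof.
move=> [n [f [g [-> [-> le]]]]] tot; congr PFun.
by apply: functional_extensionality => x; apply: le; apply: tot.
Qed.

Lemma clone_mnr D n k (g : n.+1.-tuple A -> option A) (s : 'I_n.+1 -> 'I_k.+1) :
  partial_clone D -> D (PFun g) -> D (PFun (mnr g s)).
Proof.
move=> [Dp Dc] Dg.
have := Dc n k g (fun i x => Some (tnth x (s i))) Dg (fun i => Dp _ (s i)).
suff -> : pcomp_raw g (fun i x => Some (tnth x (s i))) = mnr g s by [].
apply: functional_extensionality => x; rewrite /pcomp_raw.
have -> : [forall i, Some (tnth x (s i)) != None] = true by apply/forallP.
by congr g; apply: eq_from_tnth => i; rewrite !(tnth_map, tnth_ord_tuple).
Qed.

Lemma le_mnr n k (f g : n.+1.-tuple A -> option A) (s : 'I_n.+1 -> 'I_k.+1) :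
  le_raw f g -> le_raw (mnr f s) (mnr g s).
Proof. by move=> le x; rewrite /mnr => h; apply: le. Qed.

Lemma StrD_mnr D n k (f g : n.+1.-tuple A -> option A) (s : 'I_n.+1 -> 'I_k.+1) :
  partial_clone D -> D (PFun g) -> le_raw f g -> Str D (PFun (mnr f s)).
Proof.
move=> cD Dg le; exists (PFun (mnr g s)); first exact: clone_mnr.
by exists k, (mnr f s), (mnr g s); split => //; split => //; apply: le_mnr.
Qed.

Definition starf n m (f : n.+1.-tuple A -> option A) (g : m.+1.-tuple A -> option A) : (n + m).+1.-tuple A -> option A :=
  @pf A (star (PFun f) (PFun g)).

Lemma le_star n m (f f' : n.+1.-tuple A -> option A) (g g' : m.+1.-tuple A -> option A) :
  le_raw f f' -> le_raw g g' -> le_raw (starf f g) (starf f' g').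
Proof.
move=> lf lg x; rewrite /starf /=.
case eg: (g _) => [y|] // h.
by rewrite lg ?eg // lf.
Qed.

Lemma clone_star D n m (f : n.+1.-tuple A -> option A) (g : m.+1.-tuple A -> option A) :
  total_clone D -> D (PFun f) -> D (PFun g) -> D (PFun (starf f g)).
Proof.
move=> [[Dp Dc] Dt] Df Dg.
pose h := fun (i : 'I_n.+1) => if val i == 0%N then mnr g (fun i : 'I_m.+1 => (inord i : 'I_(n + m).+1))
  else (fun x : (n + m).+1.-tuple A => Some (tnth x (inord (m + i)))).
have Dh : forall i, D (PFun (h i)).
  move=> i; rewrite /h; case: ifP => _; last exact: (Dp _ (inord (m + i))).
  exact: clone_mnr.
have := Dc n (n + m) f h Df Dh.
suff -> : pcomp_raw f h = starf f g by [].
apply: functional_extensionality => x; rewrite /pcomp_raw /starf /=.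
case eg: (g _) => [y|]; last by case: (Dt _ Dg _ eg).
have -> : [forall i, h i x != None] = true.
  apply/forallP => i; rewrite /h; case: ifP => // _.
  by rewrite /mnr eg.
congr f; apply: eq_from_tnth => i; rewrite !(tnth_map, tnth_ord_tuple) /h.
by case: ifP => // _; rewrite /mnr eg.
Qed.

Lemma StrD_star D F G : total_clone D -> Str D F -> Str D G -> Str D (star F G).
Proof.
move=> cD [F' DF' [n [f1 [g1 [-> [eF l1]]]]]] [G' DG' [m [f2 [g2 [-> [eG l2]]]]]]; subst F' G'.
exists (PFun (starf g1 g2)); first exact: clone_star.
by exists (n + m), (starf f1 f2), (starf g1 g2); split => //; split => //; apply: le_star.
Qed.

Lemma StrD_class D : total_clone D -> partial_class (Str D).
Proof.
move=> cD; have pD := proj1 cD.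
split; first by move=> F G; apply: StrD_star.
split; first by move=> F [G DG [n [f [g [-> [eG l]]]]]]; subst G; exact: (StrD_mnr (@ordS _) pD DG l).
split; first by move=> F [G DG [n [f [g [-> [eG l]]]]]]; subst G; exact: (StrD_mnr (@tau_idx _) pD DG l).
split; first by move=> F [G DG [n [f [g [-> [eG l]]]]]]; subst G; exact: (StrD_mnr (lift ord0) pD DG l).
move=> F [G DG [n [f [g [-> [eG l]]]]]]; subst G; case: n f g DG l => [|n] f g DG l.
  by exists (PFun g) => //; exists 0%N, f, g.
exact: (StrD_mnr (fun i : 'I_n.+2 => (inord i.-1 : 'I_n.+1)) pD DG l).
Qed.

Lemma U_class D T : total_clone D -> strong_partial_class T ->
 (forall f g, T f -> Str D g -> Str D (star f g) \/ T (star f g)) ->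
 (forall f g, Str D f -> T g -> Str D (star f g) \/ T (star f g)) ->
 partial_class (fun F => Str D F \/ T F).
Proof.
move=> cD [[Ts [Tz [Tt [Tn Td]]]] _] h1 h2.
have [Ds [Dz [Dt [Dn Dd]]]] := StrD_class cD.
split; first move=> F G [SF|TF] [SG|TG].
- by left; apply: Ds.
- exact: h2.
- exact: h1.
- by right; apply: Ts.
split; first by move=> F [?|?]; [left; apply: Dz | right; apply: Tz].
split; first by move=> F [?|?]; [left; apply: Dt | right; apply: Tt].
split; first by move=> F [?|?]; [left; apply: Dn | right; apply: Tn].
by move=> F [?|?]; [left; apply: Dd | right; apply: Td].
Qed.

Lemma U_comp D T : total_clone D -> strong_partial_class T ->
 (forall f g, T f -> Str D g -> Str D (star f g) \/ T (star f g)) ->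
 (forall f g, Str D f -> T g -> Str D (star f g) \/ T (star f g)) ->
 partial_clone (fun F => Str D F \/ T F).
Proof.
move=> cD cT h1 h2; split.
  by move=> n i; left; apply: Str_incl; apply: (proj1 (proj1 cD)).
move=> n m f g Sf Sg.
exact: (comp_closed (U_class cD cT h1 h2) Sf Sg).
Qed.
End Main.

Theorem mainTheorem11 (A : finType) (C D T : pset A) (I : pset A -> Prop) :
  total_clone C -> total_clone D -> (forall f, D f -> C f) ->
  strong_partial_class T ->
  (forall X, I X -> Istr C X) ->
  (forall f, T f -> ptotal f -> D f) ->
  (forall f g, T f -> Str D g -> Str D (star f g) \/ T (star f g)) ->
  (forall f g, Str D f -> T g -> Str D (star f g) \/ T (star f g)) ->
  (forall X Y, I X -> I Y -> X <> Y ->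
     (fun f => X f /\ T f) <> (fun f => Y f /\ T f)) ->
  card_ge (Istr D) I.
Proof.
move=> cC cD DC cT hI hTD h1 h2 hsep.
have cU := U_comp cD cT h1 h2.
exists (fun X F => X F /\ (Str D F \/ T F)); split.
- move=> X IX; have [[Xp Xc] [sX eX]] := hI X IX.
  have XD : forall F, D F -> X F.
    move=> F DF; have : C F by apply: DC.
    by rewrite -eX => -[].
  split; [split|split].
  + by move=> n i; split; [apply: Xp | apply: (proj1 cU)].
  + move=> n m f g [Xf Uf] Hg; split.
      by apply: Xc => // i; case: (Hg i).
    by apply: (proj2 cU) => // i; case: (Hg i).
  + apply: functional_extensionality => F; apply: propositional_extensionality; split.
      by move=> H; apply: Str_incl.
    move=> [G [XG [SG|TG]] l]; split.
    * by rewrite sX; exists G.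
    * by left; apply: Str_Str; exists G.
    * by rewrite sX; exists G.
    * by right; rewrite (proj2 cT); exists G.
  + apply: functional_extensionality => F; apply: propositional_extensionality; split.
      move=> [[XF [[G DG l]|TF]] tot]; last exact: hTD.
      by rewrite -(ple_total l tot).
    move=> DF; split; first split.
    * exact: XD.
    * by left; apply: Str_incl.
    * exact: (proj2 cD).
- move=> X Y IX IY e; apply: NNPP => ne; apply: (hsep X Y IX IY ne).
  apply: functional_extensionality => F; apply: propositional_extensionality.
  have eF : (X F /\ (Str D F \/ T F)) = (Y F /\ (Str D F \/ T F)) := f_equal (fun P => P F) e.
  split => -[XF TF]; split => //.
    have : Y F /\ (Str D F \/ T F) by rewrite -eF; split => //; right.
    by case.
  have : X F /\ (Str D F \/ T F) by rewrite eF; split => //; right.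
  by case.
Qed.
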